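(* Let $Y$ be a Young diagram with row lengths $a_1\ge\cdots\ge a_m\ge0$, let $P\subseteq (C\times S)\cup(R\times S)\cup(R\times C)$, and let $1\le i<j\le a_1$. Let $P'=\phi_{c_i,c_j}(P)$. Then (1) $|P'|=|P|$, and (2) if $P$ is a 2-cover of $H(Y)$, then so is $P'$.
   Context: $H(Y)$ has vertex sides $R=\{r_1,\dots,r_m\}$, $C=\{c_1,\dots,c_{a_1}\}$, $S=\{s_1,\dots,s_{a_1}\}$ and edges $\{r_\ell,c_a,s_b\}$ for $1\le\ell\le m$, $1\le a,b\le a_\ell$. For disjoint $A,B$, $A\times B$ is the set of pairs $\{x,y\}$ with $x\in A,y\in B$. A 2-cover of $H(Y)$ is a set of pairs such that every edge of $H(Y)$ contains one of them. Given $P$, let $Q=P\cap(C\times S)$, $W=P\cap(R\times C)$, $N_Q(c)=\{s\in S: cs\in Q\}$, $N_W(c)=\{r\in R: rc\in W\}$, and for an integer $t$ let $L_t=\{r_\ell\in R: a_\ell<t\}$. The shifting $\phi_{c_i,c_j}(P)$ (for $i<j$) is obtained from $P$ by deleting all pairs of $P$ containing $c_i$ or $c_j$ and adding the pairs $\{c_i\}\times(N_Q(c_i)\cup N_Q(c_j))$, $\{c_j\}\times(N_Q(c_i)\cap N_Q(c_j))$, $\{c_i\}\times\big(N_W(c_i)\cap(N_W(c_j)\cup L_j)\big)$, and $\{c_j\}\times\big(N_W(c_j)\cup(N_W(c_i)\setminus L_j)\big)$. *)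

(* Defs.v *)
From mathcomp Require Import all_boot.
Set Implicit Arguments. Unset Strict Implicit. Unset Printing Implicit Defensive.

Section HY.
Variables (m n : nat).
(* Vertex set R ⊔ C ⊔ S; r_l, c_a, s_b are 0-based: r l = r_{l+1}, etc. *)
Definition vert : finType := (('I_m + 'I_n) + 'I_n)%type.
Definition rv (l : 'I_m) : vert := inl (inl l).
Definition cv (x : 'I_n) : vert := inl (inr x).
Definition sv (y : 'I_n) : vert := inr y.
Definition Rset : {set vert} := [set rv l | l : 'I_m].
Definition Cset : {set vert} := [set cv x | x : 'I_n].
Definition Sset : {set vert} := [set sv y | y : 'I_n].

Definition pairs (A B : {set vert}) : {set {set vert}} :=
  [set [set x; y] | x in A, y in B].

Definition is_edge (a : 'I_m -> nat) (e : {set vert}) : Prop :=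
  exists l : 'I_m, exists x : 'I_n, exists y : 'I_n,
    [/\ (x < a l)%N, (y < a l)%N & e = [set rv l; cv x; sv y]].

Definition two_cover (a : 'I_m -> nat) (P : {set {set vert}}) : Prop :=
  forall e, is_edge a e -> exists2 p, p \in P & p \subset e.

Definition NQ (P : {set {set vert}}) (x : 'I_n) : {set 'I_n} :=
  [set y | [set cv x; sv y] \in P].
Definition NW (P : {set {set vert}}) (x : 'I_n) : {set 'I_m} :=
  [set l | [set rv l; cv x] \in P].
Definition Lt (a : 'I_m -> nat) (t : nat) : {set 'I_m} := [set l | (a l < t)%N].

(* phi_{c_i,c_j}(P); i, j are 0-based so c_j = cv j has 1-based index j+1,
   hence L_j (1-based) is Lt a j.+1. *)
Definition shift (a : 'I_m -> nat) (i j : 'I_n) (P : {set {set vert}})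
    : {set {set vert}} :=
  [set p in P | (cv i \notin p) && (cv j \notin p)]
  :|: [set [set cv i; sv y] | y in NQ P i :|: NQ P j]
  :|: [set [set cv j; sv y] | y in NQ P i :&: NQ P j]
  :|: [set [set cv i; rv l] | l in NW P i :&: (NW P j :|: Lt a j.+1)]
  :|: [set [set cv j; rv l] | l in NW P j :|: (NW P i :\: Lt a j.+1)].
End HY.

(* Main.v *)
Require Import Defs.
From mathcomp Require Import all_boot.
Set Implicit Arguments. Unset Strict Implicit.
Section S.
Variables (m n : nat).
Local Notation V := (vert m n).
Lemma eRC (l : 'I_m) (x : 'I_n) : (rv n l == cv m x) = false. Proof. by []. Qed.
Lemma eCR (l : 'I_m) (x : 'I_n) : (cv m x == rv n l) = false. Proof. by []. Qed.
Lemma eRS (l : 'I_m) (x : 'I_n) : (rv n l == sv m x) = false. Proof. by []. Qed.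
Lemma eSR (l : 'I_m) (x : 'I_n) : (sv m x == rv n l) = false. Proof. by []. Qed.
Lemma eCS (y : 'I_n) (x : 'I_n) : (cv m y == sv m x) = false. Proof. by []. Qed.
Lemma eSC (y : 'I_n) (x : 'I_n) : (sv m x == cv m y) = false. Proof. by []. Qed.
Lemma eCC (x y : 'I_n) : (cv m x == cv m y) = (x == y). Proof. by apply/eqP/eqP => [[]|->]. Qed.
Lemma eRR (x y : 'I_m) : (rv n x == rv n y) = (x == y). Proof. by apply/eqP/eqP => [[]|->]. Qed.
Lemma eSS (x y : 'I_n) : (sv m x == sv m y) = (x == y). Proof. by apply/eqP/eqP => [[]|->]. Qed.
Definition eV := (eRC, eCR, eRS, eSR, eCS, eSC, eCC, eRR, eSS).

Lemma cardUD (A B : {set {set V}}) :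
  (forall p, p \in A -> p \in B -> False) -> #|A :|: B| = #|A| + #|B|.
Proof.
move=> H; rewrite cardsU; have ->: A :&: B = set0.
  by apply/setP=> p; rewrite !inE; apply/negP => /andP[a b]; exact: (H p a b).
by rewrite cards0 subn0.
Qed.

Definition HPt (P : {set {set V}}) := P \subset pairs (Cset m n) (Sset m n) :|: pairs (Rset m n) (Sset m n)
                  :|: pairs (Rset m n) (Cset m n).

Lemma shapeP P p : HPt P -> p \in P ->
  [\/ exists x y, p = [set cv m x; sv m y],
      exists l y, p = [set rv n l; sv m y] |
      exists l x, p = [set rv n l; cv m x]].
Proof.
move=> /subsetP H /H; rewrite !inE => /orP[/orP[]|] /imset2P[u v Hu Hv ->];
  move: Hu Hv => /imsetP[a _ ->] /imsetP[b _ ->].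
- by apply: Or31; exists a, b.
- by apply: Or32; exists a, b.
- by apply: Or33; exists a, b.
Qed.

Lemma coverP P p (l : 'I_m) (x y : 'I_n) : HPt P -> p \in P ->
  p \subset [set rv n l; cv m x; sv m y] ->
  [\/ [set rv n l; sv m y] \in P, [set cv m x; sv m y] \in P | [set rv n l; cv m x] \in P].
Proof.
move=> HP pP /subsetP sub.
case: (shapeP HP pP) => [[a [b E]]|[a [b E]]|[a [b E]]]; rewrite E in pP sub.
- have := sub _ (set21 _ _); have := sub _ (set22 _ _); rewrite !inE !eV /= ?orbF.
  by move=> /eqP Eb /eqP Ea; subst a b; apply: Or32.
- have := sub _ (set21 _ _); have := sub _ (set22 _ _); rewrite !inE !eV /= ?orbF.
  by move=> /eqP Eb /eqP Ea; subst a b; apply: Or31.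
- have := sub _ (set21 _ _); have := sub _ (set22 _ _); rewrite !inE !eV /= ?orbF.
  by move=> /eqP Eb /eqP Ea; subst a b; apply: Or33.
Qed.


Lemma sub2 (u v : V) (e : {set V}) : u \in e -> v \in e -> [set u; v] \subset e.
Proof. by move=> hu hv; rewrite subUset !sub1set hu hv. Qed.

Variables (a : 'I_m -> nat) (i j : 'I_n).
Lemma ne_ij (Hij : (i < j)%N) : (i == j) = false.
Proof. by apply/eqP => E; rewrite E ltnn in Hij. Qed.
Lemma ne_ji (Hij : (i < j)%N) : (j == i) = false.
Proof. by rewrite eq_sym ne_ij. Qed.

Lemma m1 (P : {set {set V}}) p : p \in P -> cv m i \notin p -> cv m j \notin p -> p \in shift a i j P.
Proof. by move=> h1 h2 h3; rewrite /shift !in_setU inE h1 h2 h3. Qed.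
Lemma m2 (P : {set {set V}}) y : y \in NQ P i :|: NQ P j -> [set cv m i; sv m y] \in shift a i j P.
Proof. by move=> h; rewrite /shift !in_setU (imset_f (fun y0 => [set cv m i; sv m y0]) h) ?orbT. Qed.
Lemma m3 (P : {set {set V}}) y : y \in NQ P i :&: NQ P j -> [set cv m j; sv m y] \in shift a i j P.
Proof. by move=> h; rewrite /shift !in_setU (imset_f (fun y0 => [set cv m j; sv m y0]) h) ?orbT. Qed.
Lemma m4 (P : {set {set V}}) l : l \in NW P i :&: (NW P j :|: Lt a j.+1) -> [set cv m i; rv n l] \in shift a i j P.
Proof. by move=> h; rewrite /shift !in_setU (imset_f (fun l0 => [set cv m i; rv n l0]) h) ?orbT. Qed.
Lemma m5 (P : {set {set V}}) l : l \in NW P j :|: (NW P i :\: Lt a j.+1) -> [set cv m j; rv n l] \in shift a i j P.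
Proof. by move=> h; rewrite /shift !in_setU (imset_f (fun l0 => [set cv m j; rv n l0]) h) ?orbT. Qed.

Lemma cover_shift (Hij : (i < j)%N) (P : {set {set V}}) : HPt P -> two_cover a P -> two_cover a (shift a i j P).
Proof.
move=> HP Hc e [l [x [y [hx hy ->]]]].
have cov : forall (l : 'I_m) (x y : 'I_n), (x < a l)%N -> (y < a l)%N ->
  [\/ [set rv n l; sv m y] \in P, [set cv m x; sv m y] \in P | [set rv n l; cv m x] \in P].
  move=> l' x' y' h1 h2.
  have [p pP ps] := Hc _ (ex_intro _ l' (ex_intro _ x' (ex_intro _ y' (And3 h1 h2 erefl)))).
  exact: coverP ps.
have inE3 : forall v, v \in [set rv n l; cv m x; sv m y] = [|| v == rv n l, v == cv m x | v == sv m y].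
  by move=> v; rewrite !inE -orbA.
case rs: ([set rv n l; sv m y] \in P).
  exists [set rv n l; sv m y]; last by apply: sub2; rewrite inE3 eqxx ?orbT.
  by apply: m1 => //; rewrite !inE !eV.
have NQE : forall x y : 'I_n, (y \in NQ P x) = ([set cv m x; sv m y] \in P) by move=> *; rewrite inE.
have NWE : forall (x : 'I_n) (l : 'I_m), (l \in NW P x) = ([set rv n l; cv m x] \in P) by move=> *; rewrite inE.
have s2 : forall x' : 'I_n, x' = x -> [set cv m x'; sv m y] \subset [set rv n l; cv m x; sv m y].
  by move=> x' ->; apply: sub2; rewrite inE3 eqxx ?orbT.
have s4 : forall x' : 'I_n, x' = x -> [set cv m x'; rv n l] \subset [set rv n l; cv m x; sv m y].
  by move=> x' ->; apply: sub2; rewrite inE3 eqxx ?orbT.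
have [exi|nxi] := eqVneq x i.
  subst x.
  case qi: (y \in NQ P i).
    by exists [set cv m i; sv m y]; [apply: m2; rewrite inE qi | exact: s2].
  case: (cov l i y hx hy); rewrite ?rs // -?NQE ?qi // -?NWE => wi.
  case lj: (l \in NW P j :|: Lt a j.+1).
    by exists [set cv m i; rv n l]; [apply: m4; rewrite inE wi lj | exact: s4].
  move: lj; rewrite !inE => /negbT/norP[wj]; rewrite -leqNgt => hj.
  case: (cov l j y hj hy); rewrite ?rs ?(negbTE wj) // -?NQE => qj.
  by exists [set cv m i; sv m y]; [apply: m2; rewrite inE qj orbT | exact: s2].
have [exj|nxj] := eqVneq x j.
  subst x.
  have hi : (i < a l)%N by apply: ltn_trans hx.
  case wj: (l \in NW P j).
    by exists [set cv m j; rv n l]; [apply: m5; rewrite inE wj | exact: s4].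
  case: (cov l j y hx hy); rewrite ?rs // -?NQE -?NWE ?wj // => qj.
  case qi: (y \in NQ P i).
    by exists [set cv m j; sv m y]; [apply: m3; rewrite inE qi qj | exact: s2].
  case: (cov l i y hi hy); rewrite ?rs // -?NQE ?qi // -?NWE => wi.
  exists [set cv m j; rv n l]; last exact: s4.
  by apply: m5; rewrite in_setU in_setD wi wj /= inE -leqNgt andbT.
case: (cov l x y hx hy); rewrite ?rs // => h.
  by exists [set cv m x; sv m y]; [apply: m1; rewrite // !inE !eV ?orbF eq_sym ?nxi ?nxj | exact: s2].
by exists [set rv n l; cv m x]; [apply: m1; rewrite // !inE !eV ?orbF eq_sym ?nxi ?nxj | apply: sub2; rewrite inE3 eqxx ?orbT].
Qed.

Lemma set2C (u v : V) : [set u; v] = [set v; u].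
Proof. by apply/setP => t; rewrite !inE orbC. Qed.

Definition kp (p : {set V}) := (cv m i \in p, cv m j \in p, [exists y, sv m y \in p]).

Lemma exS (x y : 'I_n) : [exists y0, sv m y0 \in [set cv m x; sv m y]].
Proof. by apply/existsP; exists y; rewrite !inE eqxx orbT. Qed.
Lemma exR (x : 'I_n) (l : 'I_m) : [exists y0, sv m y0 \in [set cv m x; rv n l]] = false.
Proof. by apply/negbTE/existsPn => y0; rewrite !inE !eV. Qed.

Section K.
Variable (Hij : (i < j)%N).
Variable (P : {set {set V}}).
Lemma kA2 p : p \in [set [set cv m i; sv m y] | y in NQ P i :|: NQ P j] -> kp p = (true, false, true).
Proof. by case/imsetP => y _ ->; rewrite /kp exS !inE !eV eqxx ne_ji. Qed.
Lemma kA3 p : p \in [set [set cv m j; sv m y] | y in NQ P i :&: NQ P j] -> kp p = (false, true, true).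
Proof. by case/imsetP => y _ ->; rewrite /kp exS !inE !eV eqxx ne_ij. Qed.
Lemma kA4 p : p \in [set [set cv m i; rv n l] | l in NW P i :&: (NW P j :|: Lt a j.+1)] -> kp p = (true, false, false).
Proof. by case/imsetP => y _ ->; rewrite /kp exR !inE !eV eqxx ne_ji. Qed.
Lemma kA5 p : p \in [set [set cv m j; rv n l] | l in NW P j :|: (NW P i :\: Lt a j.+1)] -> kp p = (false, true, false).
Proof. by case/imsetP => y _ ->; rewrite /kp exR !inE !eV eqxx ne_ij. Qed.
End K.

Lemma keyD (A B : {set {set V}}) k : (forall p, p \in A -> kp p != k) -> (forall p, p \in B -> kp p = k) ->
  forall p, p \in A -> p \in B -> False.
Proof. by move=> HA HB p pA pB; move: (HA p pA); rewrite (HB p pB) eqxx. Qed.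

Lemma inj_S (x : 'I_n) : injective (fun y : 'I_n => [set cv m x; sv m y]).
Proof. by move=> y1 y2 /setP /(_ (sv m y1)); rewrite !inE !eV eqxx /= => /esym/eqP. Qed.
Lemma inj_R (x : 'I_n) : injective (fun l : 'I_m => [set cv m x; rv n l]).
Proof. by move=> y1 y2 /setP /(_ (rv n y1)); rewrite !inE !eV eqxx /= => /esym/eqP. Qed.

Lemma no_two (Hij : (i < j)%N) (P : {set {set V}}) p : HPt P -> p \in P -> cv m i \in p -> cv m j \in p -> False.
Proof.
move=> HP pP; case: (shapeP HP pP) => [[x [y ->]]|[x [y ->]]|[x [y ->]]]; rewrite !inE !eV ?orbF //=.
- by move=> /eqP Ei /eqP Ej; move: Hij; rewrite Ei Ej ltnn.
- by move=> /eqP Ei /eqP Ej; move: Hij; rewrite Ei Ej ltnn.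
Qed.

Lemma Ci_split (P : {set {set V}}) (x : 'I_n) : HPt P ->
  [set p in P | cv m x \in p] =
  [set [set cv m x; sv m y] | y in NQ P x] :|: [set [set cv m x; rv n l] | l in NW P x].
Proof.
move=> HP; apply/eqP; rewrite eqEsubset; apply/andP; split; apply/subsetP => p.
  rewrite inE => /andP[pP]; case: (shapeP HP pP) => [[x' [y E]]|[x' [y E]]|[x' [y E]]];
    rewrite E !inE !eV ?orbF //= in pP *.
    move/eqP => ex; rewrite -ex in pP *.
    by rewrite (imset_f (fun y0 => [set cv m x; sv m y0])) // inE.
  move/eqP => ex; rewrite -ex in pP *.
  by rewrite set2C (imset_f (fun y0 => [set cv m x; rv n y0])) ?orbT // inE.
rewrite in_setU => /orP[] /imsetP[y yP ->]; rewrite !inE in yP; rewrite inE.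
  by rewrite yP !inE eqxx.
by rewrite set2C yP !inE eqxx orbT.
Qed.

Lemma card_shift (Hij : (i < j)%N) (P : {set {set V}}) : HPt P -> #|shift a i j P| = #|P|.
Proof.
move=> HP.
set K := [set p in P | (cv m i \notin p) && (cv m j \notin p)].
have PE : P = K :|: [set p in P | cv m i \in p] :|: [set p in P | cv m j \in p].
  apply/setP => p; rewrite !inE.
  by case: (p \in P); case: (cv m i \in p); case: (cv m j \in p).
have cP : #|P| = #|K| + #|[set p in P | cv m i \in p]| + #|[set p in P | cv m j \in p]|.
  rewrite {1}PE cardUD ?cardUD //.
    by move=> p; rewrite !inE => /andP[_ /andP[/negbTE ->]]; rewrite andbF.
  move=> p; rewrite !inE => /orP[/andP[_ /andP[_ /negbTE ->]]|/andP[pP pi]]; first by rewrite andbF.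
  by case/andP => _ pj; apply: (no_two Hij HP pP).
have cx : forall x : 'I_n, #|[set p in P | cv m x \in p]| = #|NQ P x| + #|NW P x|.
  move=> x; rewrite Ci_split // cardUD ?card_imset //; try (exact: inj_S); try (exact: inj_R).
  by move=> p /imsetP[y _ ->] /imsetP[l _] /setP /(_ (sv m y)); rewrite !inE !eV eqxx.
have cS : #|shift a i j P| =
   #|K| + #|[set [set cv m i; sv m y] | y in NQ P i :|: NQ P j]|
        + #|[set [set cv m j; sv m y] | y in NQ P i :&: NQ P j]|
        + #|[set [set cv m i; rv n l] | l in NW P i :&: (NW P j :|: Lt a j.+1)]|
        + #|[set [set cv m j; rv n l] | l in NW P j :|: (NW P i :\: Lt a j.+1)]|.
  rewrite /shift cardUD; last first.
    apply: keyD (kA5 (P:=P) Hij) => p; rewrite ?in_setU => H; repeat (case/orP: H => H);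
    solve [ by rewrite (kA2 Hij H) | by rewrite (kA3 Hij H) | by rewrite (kA4 Hij H)
          | by move: H; rewrite inE /kp => /andP[_ /andP[/negbTE -> /negbTE ->]] ].
  rewrite cardUD; last first.
    apply: keyD (kA4 (P:=P) Hij) => p; rewrite ?in_setU => H; repeat (case/orP: H => H);
    solve [ by rewrite (kA2 Hij H) | by rewrite (kA3 Hij H) | by rewrite (kA4 Hij H)
          | by move: H; rewrite inE /kp => /andP[_ /andP[/negbTE -> /negbTE ->]] ].
  rewrite cardUD; last first.
    apply: keyD (kA3 (P:=P) Hij) => p; rewrite ?in_setU => H; repeat (case/orP: H => H);
    solve [ by rewrite (kA2 Hij H) | by rewrite (kA3 Hij H) | by rewrite (kA4 Hij H)
          | by move: H; rewrite inE /kp => /andP[_ /andP[/negbTE -> /negbTE ->]] ].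
  rewrite cardUD //; last first.
    apply: keyD (kA2 (P:=P) Hij) => p; rewrite ?in_setU => H; repeat (case/orP: H => H);
    solve [ by rewrite (kA2 Hij H) | by rewrite (kA3 Hij H) | by rewrite (kA4 Hij H)
          | by move: H; rewrite inE /kp => /andP[_ /andP[/negbTE -> /negbTE ->]] ].
rewrite cS cP !cx.
rewrite !card_imset; try (exact: inj_S); try (exact: inj_R).
have hQ := cardsUI (NQ P i) (NQ P j).
set U := NW P i; set W := NW P j; set L := Lt a j.+1.
have hW : #|U :&: (W :|: L)| + #|W :|: (U :\: L)| = #|U| + #|W|.
  have E1 : U :&: (W :|: L) :|: W :|: (U :\: L) = U :|: W.
    by apply/setP => t; rewrite !(in_setU, in_setI, in_setD); case: (t \in U); case: (t \in W); case: (t \in L).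
  have E2 : U :&: (W :|: L) :&: (W :|: (U :\: L)) = U :&: W.
    by apply/setP => t; rewrite !(in_setU, in_setI, in_setD); case: (t \in U); case: (t \in W); case: (t \in L).
  by rewrite -cardsUI -(cardsUI U W) setUA E1 E2.
rewrite -!addnA; congr (_ + _); rewrite addnA hQ hW -!addnA; congr (_ + _); by rewrite addnCA.
Qed.
End S.

Unset Implicit Arguments.
Set Strict Implicit.
Theorem lemma3 (m n : nat) (a : 'I_m -> nat)
  (Hm : (0 < m)%N)
  (Ha_mono : forall l1 l2 : 'I_m, (l1 <= l2)%N -> (a l2 <= a l1)%N)
  (Ha_first : forall l : 'I_m, val l = 0%N -> a l = n)
  (P : {set {set vert m n}})
  (HP : P \subset pairs (Cset m n) (Sset m n) :|: pairs (Rset m n) (Sset m n)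
                  :|: pairs (Rset m n) (Cset m n))
  (i j : 'I_n) (Hij : (i < j)%N) :
  #|shift a i j P| = #|P| /\ (two_cover a P -> two_cover a (shift a i j P)).
Proof.
split; first exact: (@card_shift m n a i j Hij P HP).
exact: (@cover_shift m n a i j Hij P HP).
Qed.
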